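(* Fix $h\in\{2,\dots,H\}$. Let $\hat f=(\hat w,\hat\phi^F_{h-1},\hat\phi^B_h)$, i.e. $\hat f(x,a,x')=\hat w(\hat\phi^F_{h-1}(x),a,\hat\phi^B_h(x'))$, be the empirical square-loss risk minimizer over $\mathcal{F}_N$ on $n$ i.i.d. samples from $D$, and suppose $\mathbb{E}_D[(\hat f(x,a,x')-f^\star(x,a,x'))^2]\le\Delta_{reg}$ where $\Delta_{reg}=\frac{16(\ln|\Phi_N|+N^2|\mathcal{A}|\ln(n)+\ln(2/\delta))}{n}$. Then for each $i\in[N]$, $$\mathbb{E}_{D_{coup}}\big[1\{\hat\phi^B_h(x_1')=i=\hat\phi^B_h(x_2')\}\,|V(x_1',x_2',x,a)|\big]\le8\sqrt{b_i\Delta_{reg}}.$$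
   Context: Block MDP: horizon $H$; finite latent states $\mathcal{S}=\sqcup_h\mathcal{S}_h$; countable observations $\mathcal{X}=\sqcup_h\mathcal{X}_h$; finite actions $\mathcal{A}$; transitions $T(\cdot\mid s,a)\in\Delta(\mathcal{S}_{h+1})$; emissions $q(\cdot\mid s)\in\Delta(\mathcal{X}_h)$ with disjoint supports, decoder $g^\star$; $T(x'\mid x,a)=q(x'\mid g^\star(x'))T(g^\star(x')\mid g^\star(x),a)$. $\Psi_{h-1}$ is a finite set of policies forming an $\alpha$-policy cover of $\mathcal{S}_{h-1}$ (so $\rho_h>0$ on reachable observations). $D$: draw two independent transitions $(x_j,a_j,x_j')$, each by rolling in to $x_j\in\mathcal{X}_{h-1}$ with a uniformly chosen policy of $\Psi_{h-1}$, $a_j\sim\mathrm{Unf}(\mathcal{A})$, $x_j'\sim T(\cdot\mid x_j,a_j)$; with probability $1/2$ output $(x_1,a_1,x_1',1)$, else $(x_1,a_1,x_2',0)$. $D(x,a)$ denotes the marginal of $(x_1,a_1)$ and $\rho_h$ the marginal of $x_1'$ on $\mathcal{X}_h$ (lifted to states by summing). $f^\star(x,a,x')=\frac{T(g^\star(x')\mid g^\star(x),a)}{T(g^\star(x')\mid g^\star(x),a)+\rho_h(g^\star(x'))}$. $D_{coup}$ is the distribution on $(x,a,x_1',x_2')$ with density $D(x,a)\rho_h(x_1')\rho_h(x_2')$. $V(x_1',x_2',x,a)=\frac{T(g^\star(x_1')\mid g^\star(x),a)}{\rho_h(g^\star(x_1'))}-\frac{T(g^\star(x_2')\mid g^\star(x),a)}{\rho_h(g^\star(x_2'))}$.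 $b_i=\mathbb{E}_{x'\sim\rho_h}[1\{\hat\phi^B_h(x')=i\}]$. $\Phi_N$ is a finite class of maps $\mathcal{X}\to[N]$; $\mathcal{W}_N$ all functions $[N]\times\mathcal{A}\times[N]\to[0,1]$; $\mathcal{F}_N=\{(x,a,x')\mapsto w(\phi^F(x),a,\phi^B(x'))\}$; $\delta\in(0,1)$. *)

(* Defs.v *)
From HB Require Import structures.
From mathcomp Require Import all_boot all_order all_algebra.
From mathcomp Require Import all_classical all_reals all_analysis.
Set Implicit Arguments. Unset Strict Implicit. Unset Printing Implicit Defensive.
Import Order.TTheory GRing.Theory Num.Theory.
Local Open Scope ring_scope.
Local Open Scope classical_set_scope.

(* Countable sum of a (nonnegative) real function, as a real number.
   Only used for quantities that are finite (bounded by 1) under the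
   Block-MDP hypotheses. *)
Definition csum {R : realType} {T : choiceType} (f : T -> R) : R :=
  fine (\esum_(t in [set: T]) (f t)%:E)%E.

Section BlockMDP.
Variables (R : realType) (H : nat).
Variables (S : finType) (X : countType) (A : finType).
(* layer of a latent state, emission q s x = q(x|s), decoder gstar,
   latent transition T s a s' = T(s'|s,a), initial latent distribution d1 *)
Variables (lay : S -> nat) (q : S -> X -> R) (gstar : X -> S)
          (T : S -> A -> S -> R) (d1 : S -> R).

Definition block_mdp : Prop :=
  [/\ (forall s, 1 <= lay s <= H)%N,
      (forall s x, 0 <= q s x) /\ (forall s x, q s x != 0 -> gstar x = s)
        /\ (forall s, csum (q s) = 1),
      (forall s a s', 0 <= T s a s') /\
        (forall s a, (lay s < H)%N -> \sum_(s' : S) T s a s' = 1) /\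
        (forall s a s', T s a s' != 0 -> lay s' = (lay s).+1) &
      (forall s, 0 <= d1 s) /\ (\sum_(s : S) d1 s = 1) /\
        (forall s, d1 s != 0 -> lay s = 1%N) ].

Definition is_policy (pi : X -> A -> R) : Prop :=
  (forall x a, 0 <= pi x a) /\ (forall x, \sum_(a : A) pi x a = 1).

Definition pibar (pi : X -> A -> R) (s : S) (a : A) : R :=
  csum (fun x => q s x * pi x a).

(* occ pi k s = P^pi(s_k = s), the latent state distribution at layer k *)
Fixpoint occ (pi : X -> A -> R) (k : nat) : S -> R :=
  match k with
  | 0 => fun _ => 0
  | k'.+1 =>
    match k' with
    | 0 => d1
    | _ => fun s' => \sum_(s : S) \sum_(a : A)
                       occ pi k' s * pibar pi s a * T s a s'
    end
  end.

Definition occ_obs (pi : X -> A -> R) (k : nat) (x : X) : R :=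
  \sum_(s : S) occ pi k s * q s x.

Definition policy_cover (I : finType) (Psi : I -> X -> A -> R)
    (alpha : R) (k : nat) : Prop :=
  forall s, lay s = k -> forall pi, is_policy pi ->
    alpha * occ pi k s <= \big[Num.max/0]_(i : I) occ (Psi i) k s.

Definition Tobs (x : X) (a : A) (x' : X) : R :=
  q (gstar x') x' * T (gstar x) a (gstar x').

Section Sampling.
Variables (I : finType) (Psi : I -> X -> A -> R) (h : nat).

(* D(x,a): roll in to X_{h-1} with a uniformly chosen policy of Psi,
   then a uniform action *)
Definition Dxa (x : X) (a : A) : R :=
  ((#|I|%:R)^-1 * \sum_(i : I) occ_obs (Psi i) h.-1 x) / #|A|%:R.

(* rho_h on observations: marginal of x_1' *)
Definition rho_obs (x' : X) : R :=
  csum (fun x => \sum_(a : A) Dxa x a * Tobs x a x').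

Definition rho_st (s : S) : R :=
  csum (fun x' => if gstar x' == s then rho_obs x' else 0).

Definition fstar (x : X) (a : A) (x' : X) : R :=
  T (gstar x) a (gstar x') / (T (gstar x) a (gstar x') + rho_st (gstar x')).

(* density of D on (x, a, x', y): with prob 1/2 a real transition (y = 1),
   otherwise an independent x_2' ~ rho_h (y = 0) *)
Definition Dens (z : X * A * X * bool) : R :=
  let: (x, a, x', y) := z in
  if y then Dxa x a * Tobs x a x' / 2 else Dxa x a * rho_obs x' / 2.

Definition ED (F : X * A * X * bool -> R) : \bar R :=
  (\esum_(z in [set: X * A * X * bool]) (Dens z * F z)%:E)%E.

Definition Vfun (x1' x2' x : X) (a : A) : R :=
  T (gstar x) a (gstar x1') / rho_st (gstar x1')
  - T (gstar x) a (gstar x2') / rho_st (gstar x2').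

Definition EDcoup (F : X * A * X * X -> R) : \bar R :=
  (\esum_(z in [set: X * A * X * X])
     (let: (x, a, x1', x2') := z in
      Dxa x a * rho_obs x1' * rho_obs x2' * F z)%:E)%E.

Definition bucket_mass (N : nat) (phiB : X -> 'I_N) (i : 'I_N) : R :=
  csum (fun x' => if phiB x' == i then rho_obs x' else 0).

End Sampling.
End BlockMDP.

Definition in_WN {R : realType} {A : Type} (N : nat)
    (w : 'I_N -> A -> 'I_N -> R) : Prop :=
  forall j a k, 0 <= w j a k <= 1.

Definition emp_loss {R : realType} {X A : Type} (N n : nat)
    (samples : 'I_n -> X * A * X * bool)
    (w : 'I_N -> A -> 'I_N -> R) (phiF phiB : X -> 'I_N) : R :=
  \sum_(k < n) let: (x, a, x', y) := samples k in
               (w (phiF x) a (phiB x') - (y%:R))^+2.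

Definition Delta_reg {R : realType} (card_Phi N card_A n : nat) (delta : R) : R :=
  16 * (ln (card_Phi%:R) + (N ^ 2 * card_A)%:R * ln (n%:R) + ln (2 / delta))
  / n%:R.

(* Main.v *)
Require Import Defs.
From HB Require Import structures.
From mathcomp Require Import all_boot all_order all_algebra.
From mathcomp Require Import all_classical all_reals all_analysis.
From mathcomp Require Import finmap ring lra.
Import Order.TTheory GRing.Theory Num.Theory.
Local Open Scope ring_scope.
Local Open Scope classical_set_scope.

Section Csum.
Context {R : realType} {T : choiceType}.
Implicit Types (f g : T -> R).

Lemma esum_le_seq f (c : R) : (forall x, 0 <= f x) ->
  (forall s, uniq s -> \sum_(x <- s) f x <= c) ->
  (\esum_(x in [set: T]) (f x)%:E <= c%:E)%E.
Proof.
move=> f0 Hs; apply: ge_ereal_sup => _ [F [finF _] <-].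
rewrite fsbig_finite // sumEFin lee_fin; apply: Hs; exact: fset_uniq.
Qed.

Lemma seq_le_esum f s : (forall x, 0 <= f x) -> uniq s ->
  ((\sum_(x <- s) f x)%:E <= \esum_(x in [set: T]) (f x)%:E)%E.
Proof.
move=> f0 us; apply: esum_ge; exists [set` s]; first by split => //; exact: finite_set_seq.
by rewrite -fsbig_seq // sumEFin.
Qed.

Definition bnd f := exists c : R, forall s, uniq s -> \sum_(x <- s) f x <= c.

Lemma bnd_fin f : (forall x, 0 <= f x) -> bnd f ->
  (\esum_(x in [set: T]) (f x)%:E)%E \is a fin_num.
Proof.
move=> f0 [c Hc]; rewrite ge0_fin_numE; last by apply: esum_ge0 => x _; rewrite lee_fin.
exact: le_lt_trans (esum_le_seq _ _ f0 Hc) (ltry _).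
Qed.

Lemma csum_ge0 f : (forall x, 0 <= f x) -> 0 <= csum f.
Proof. by move=> f0; apply: fine_ge0; apply: esum_ge0 => x _; rewrite lee_fin. Qed.

Lemma csumE f : (forall x, 0 <= f x) -> bnd f ->
  (csum f)%:E = (\esum_(x in [set: T]) (f x)%:E)%E.
Proof. by move=> f0 b; rewrite /csum fineK // bnd_fin. Qed.

Lemma csum_le f (c : R) : (forall x, 0 <= f x) ->
  (forall s, uniq s -> \sum_(x <- s) f x <= c) -> csum f <= c.
Proof.
move=> f0 Hc; rewrite -lee_fin csumE //; last by exists c.
exact: esum_le_seq.
Qed.

Lemma seq_le_csum f s : (forall x, 0 <= f x) -> bnd f -> uniq s ->
  \sum_(x <- s) f x <= csum f.
Proof. by move=> f0 b us; rewrite -lee_fin csumE //; exact: seq_le_esum. Qed.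

Lemma csum1_bnd f : (forall x, 0 <= f x) -> csum f != 0 -> bnd f.
Proof.
move=> f0; rewrite /csum.
have : (0 <= \esum_(x in [set: T]) (f x)%:E)%E by apply: esum_ge0 => x _; rewrite lee_fin.
case E: (\esum_(x in [set: T]) (f x)%:E)%E => [r| |] //= _ r0.
exists r => s us; rewrite -lee_fin -E; exact: seq_le_esum.
by rewrite eqxx in r0.
Qed.

Lemma bnd_le f g : (forall x, 0 <= f x <= g x) -> bnd g -> bnd f.
Proof.
move=> fg [c Hc]; exists c => s us; apply: le_trans (Hc s us).
by apply: ler_sum => x _; case/andP: (fg x).
Qed.

Lemma csum_sum (J : choiceType) (r : seq J) (g : J -> T -> R) :
  (forall j x, 0 <= g j x) -> (forall j, bnd (g j)) ->
  csum (fun x => \sum_(j <- r) g j x) = \sum_(j <- r) csum (g j).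
Proof.
move=> g0 gb; rewrite /csum.
under eq_esum do rewrite -sumEFin.
rewrite esum_sum; last by move=> *; rewrite lee_fin.
rewrite (eq_bigr (fun j => (csum (g j))%:E)); last by move=> j _; rewrite csumE.
by rewrite sumEFin.
Qed.

Lemma csumZ f (c : R) : (forall x, 0 <= f x) -> 0 <= c ->
  csum (fun x => c * f x) = c * csum f.
Proof.
move=> f0 c0; rewrite /csum.
have -> : (\esum_(x in [set: T]) (c * f x)%:E = c%:E * \esum_(x in [set: T]) (f x)%:E)%E.
  rewrite /esum -ereal_supZl //; last first.
    by apply/set0P; exists 0%E; exists set0; [exact: fsets_set0| rewrite fsbig_set0].
  congr ereal_sup; apply/seteqP; split => y.
    move=> [F [finF FT] <-].
    exists (\sum_(x \in F) (f x)%:E)%E; first by exists F.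
    rewrite !fsbig_finite // ge0_sume_distrr; last by move=> *; rewrite lee_fin.
    by apply: eq_bigr => x _; rewrite EFinM.
  move=> [z [F [finF FT] <-] <-].
  exists F => //; rewrite !fsbig_finite // ge0_sume_distrr; last by move=> *; rewrite lee_fin.
  by apply: eq_bigr => x _; rewrite EFinM.
have : (0 <= \esum_(x in [set: T]) (f x)%:E)%E by apply: esum_ge0 => x _; rewrite lee_fin.
case: (\esum_(x in [set: T]) (f x)%:E)%E => [r| |] //= _.
have [->|cp] := eqVneq c 0; first by rewrite mul0e mul0r.
by rewrite mulry gtr0_sg ?mul1e ?mulr0 // lt_def cp c0.
Qed.

End Csum.

Section Fin.
Context {R : realType}.

Lemma sum_sq_dev (U : Type) (r : seq U) (w e : U -> R) (x : R) :
  \sum_(u <- r) w u * (e u - x) ^+ 2 =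
  \sum_(u <- r) w u * e u ^+ 2 - 2 * x * \sum_(u <- r) w u * e u
  + x ^+ 2 * \sum_(u <- r) w u.
Proof.
elim: r => [|u r IH]; first by rewrite !big_nil; ring.
rewrite !big_cons IH; ring.
Qed.

Lemma cs_weighted (U : Type) (r : seq U) (w e : U -> R) :
  (forall u, 0 <= w u) ->
  (\sum_(u <- r) w u * e u) ^+ 2 <=
  (\sum_(u <- r) w u) * (\sum_(u <- r) w u * e u ^+ 2).
Proof.
move=> w0; elim: r => [|u r IH]; first by rewrite !big_nil; lra.
rewrite !big_cons.
have K : 0 <= \sum_(v <- r) w v * (e v - e u) ^+ 2.
  by apply: sumr_ge0 => v _; apply: mulr_ge0 => //; exact: sqr_ge0.
rewrite sum_sq_dev in K.
have := w0 u.
move: IH K.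
set a := \sum_(v <- r) w v; set b := \sum_(v <- r) w v * e v;
  set c := \sum_(v <- r) w v * e v ^+ 2.
move=> IH K wu.
have : 0 <= w u * (c - 2 * e u * b + e u ^+ 2 * a) by apply: mulr_ge0.
nra.
Qed.

Lemma sub_sum {U : eqType} {s L : seq U} {F : U -> R} :
  uniq s -> uniq L -> {subset s <= L} -> (forall u, 0 <= F u) ->
  \sum_(u <- s) F u <= \sum_(u <- L) F u.
Proof.
move=> us uL sL F0.
rewrite [X in _ <= X](bigID (fun u => u \in s)) /=.
have -> : \sum_(i <- L | i \in s) F i = \sum_(u <- s) F u.
  rewrite -big_filter; apply: perm_big; apply: uniq_perm; rewrite ?filter_uniq //.
  by move=> u; rewrite mem_filter; case: (boolP (u \in s)) => // /sL ->.
rewrite lerDl; exact: sumr_ge0.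
Qed.

Lemma dbl_sum (U : Type) (G : seq U) (d : R) (m e : U -> R) :
  \sum_(x1 <- G) \sum_(x2 <- G) d * m x1 * m x2 * (e x1 + e x2) =
  2 * (d * (\sum_(x <- G) m x) * (\sum_(x <- G) m x * e x)).
Proof.
have E1 x1 : \sum_(x2 <- G) d * m x1 * m x2 * (e x1 + e x2) =
    d * (m x1 * e x1) * (\sum_(x <- G) m x) + d * m x1 * (\sum_(x <- G) m x * e x).
  rewrite (eq_bigr (fun x2 => d * (m x1 * e x1) * m x2 + d * m x1 * (m x2 * e x2))); last first.
    by move=> *; ring.
  by rewrite big_split /= -!mulr_sumr.
under eq_bigr do rewrite E1.
rewrite big_split /= -!mulr_suml -!mulr_sumr; ring.
Qed.

Lemma pairs_uniq {U V : eqType} {r1 : seq U} {r2 : seq V} :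
  uniq r1 -> uniq r2 -> uniq [seq (a, b) | a <- r1, b <- r2].
Proof. by move=> u1 u2; apply: allpairs_uniq => // [[a b] [c d]] _ _. Qed.

End Fin.

Lemma pw (R : realType) (q1 q2 t1 t2 p1 p2 c : R) :
  0 <= q1 -> 0 <= q2 -> 0 <= t1 -> 0 <= t2 -> 0 <= p1 -> 0 <= p2 ->
  q1 * p1 * (q2 * p2) * `|t1 / p1 - t2 / p2| <=
  (q1 * t1 + q1 * p1) * (q2 * t2 + q2 * p2) *
  (`|c - t1 / (t1 + p1)| + `|c - t2 / (t2 + p2)|).
Proof.
move=> q10 q20 t10 t20 p10 p20.
have R0 : 0 <= (q1 * t1 + q1 * p1) * (q2 * t2 + q2 * p2) *
  (`|c - t1 / (t1 + p1)| + `|c - t2 / (t2 + p2)|).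
  by rewrite !mulr_ge0 ?addr_ge0 ?mulr_ge0.
have [p1z|p1n] := eqVneq p1 0.
  by rewrite {1}p1z mulr0 !mul0r.
have [p2z|p2n] := eqVneq p2 0.
  by rewrite {1}p2z [q2 * 0]mulr0 mulr0 !mul0r.
have p1p : 0 < p1 by rewrite lt_def p1n.
have p2p : 0 < p2 by rewrite lt_def p2n.
have s1 : t1 + p1 != 0 by rewrite gt_eqF // ltr_wpDl.
have s2 : t2 + p2 != 0 by rewrite gt_eqF // ltr_wpDl.
set D := t1 * p2 - t2 * p1.
have e1 : t1 / p1 - t2 / p2 = D / (p1 * p2) by rewrite /D; field; rewrite p1n p2n.
have e2 : t1 / (t1 + p1) - t2 / (t2 + p2) = D / ((t1 + p1) * (t2 + p2)).
  by rewrite /D; field; rewrite s1 s2.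
apply: (@le_trans _ _ (q1 * q2 * `|D|)).
  rewrite e1 normrM (ger0_norm (_ : 0 <= (p1 * p2)^-1)) ?invr_ge0 ?mulr_ge0 //.
  rewrite le_eqVlt; apply/orP; left; apply/eqP; field; by rewrite p1n p2n.
have -> : q1 * q2 * `|D| = (q1 * t1 + q1 * p1) * (q2 * t2 + q2 * p2) *
    `|t1 / (t1 + p1) - t2 / (t2 + p2)|.
  rewrite e2 normrM (ger0_norm (_ : 0 <= ((t1 + p1) * (t2 + p2))^-1)); last first.
    by rewrite invr_ge0 mulr_ge0 ?addr_ge0.
  field; by rewrite s1 s2.
rewrite ler_wpM2l ?mulr_ge0 ?addr_ge0 ?mulr_ge0 //.
have -> : t1 / (t1 + p1) - t2 / (t2 + p2) =
  (c - t2 / (t2 + p2)) - (c - t1 / (t1 + p1)) by ring.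
by apply: le_trans (ler_normB _ _) _; rewrite addrC.
Qed.

Lemma pwD (R : realType) (D q1 q2 t1 t2 p1 p2 c : R) : 0 <= D ->
  0 <= q1 -> 0 <= q2 -> 0 <= t1 -> 0 <= t2 -> 0 <= p1 -> 0 <= p2 ->
  D * (q1 * p1) * (q2 * p2) * (1 * `|t1 / p1 - t2 / p2|) <=
  D * (q1 * t1 + q1 * p1) * (q2 * t2 + q2 * p2) *
  (`|c - t1 / (t1 + p1)| + `|c - t2 / (t2 + p2)|).
Proof.
move=> D0 q10 q20 t10 t20 p10 p20; rewrite mul1r -!mulrA ler_wpM2l //.
have := @pw _ q1 q2 t1 t2 p1 p2 c q10 q20 t10 t20 p10 p20; by rewrite -!mulrA.
Qed.

Section MDP.
Variables (R : realType) (H : nat) (S : finType) (X : countType) (A : finType)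
  (lay : S -> nat) (q : S -> X -> R) (gstar : X -> S)
  (T : S -> A -> S -> R) (d1 : S -> R).
Hypothesis hmdp : block_mdp H lay q gstar T d1.

Lemma q0 s x : 0 <= q s x. Proof. by case: hmdp => _ [+ _] _ _; apply. Qed.
Lemma qsupp s x : q s x != 0 -> gstar x = s. Proof. by case: hmdp => _ [_ [+ _]] _ _; apply. Qed.
Lemma qsum s : csum (q s) = 1. Proof. by case: hmdp => _ [_ [_ +]] _ _; apply. Qed.
Lemma T0 s a s' : 0 <= T s a s'. Proof. by case: hmdp => _ _ [+ _] _; apply. Qed.
Lemma Tsum s a : (lay s < H)%N -> \sum_(s' : S) T s a s' = 1.
Proof. by case: hmdp => _ _ [_ [+ _]] _; apply. Qed.
Lemma Tlay s a s' : T s a s' != 0 -> lay s' = (lay s).+1.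
Proof. by case: hmdp => _ _ [_ [_ +]] _; apply. Qed.
Lemma d10 s : 0 <= d1 s. Proof. by case: hmdp => _ _ _ [+ _]; apply. Qed.
Lemma d1sum : \sum_(s : S) d1 s = 1. Proof. by case: hmdp => _ _ _ [_ [+ _]]. Qed.
Lemma d1lay s : d1 s != 0 -> lay s = 1%N. Proof. by case: hmdp => _ _ _ [_ [_ +]]; apply. Qed.

Lemma qbnd s : bnd (q s).
Proof. apply: csum1_bnd; first exact: q0. by rewrite qsum oner_neq0. Qed.

Lemma q_part s L : uniq L -> \sum_(x <- L) q s x <= 1.
Proof. by move=> uL; rewrite -(qsum s); apply: seq_le_csum => //; [exact: q0|exact: qbnd]. Qed.

Lemma q_le1 s x : q s x <= 1.
Proof. by have := q_part s (x :: nil) isT; rewrite big_seq1. Qed.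

Section Policy.
Variable (pi : X -> A -> R).
Hypothesis hpi : is_policy pi.

Lemma pi0 x a : 0 <= pi x a. Proof. by case: hpi. Qed.
Lemma pisum x : \sum_(a : A) pi x a = 1. Proof. by case: hpi. Qed.
Lemma pi_le1 x a : pi x a <= 1.
Proof.
rewrite -(pisum x) (bigD1 a) //= lerDl; apply: sumr_ge0 => *; exact: pi0.
Qed.

Lemma pibar0 s a : 0 <= pibar q pi s a.
Proof. apply: csum_ge0 => x; apply: mulr_ge0; [exact: q0|exact: pi0]. Qed.

Lemma pibar_sum s : \sum_(a : A) pibar q pi s a <= 1.
Proof.
rewrite /pibar -csum_sum; last first.
- move=> a; apply: (bnd_le _ _ _ (qbnd s)) => x.
  rewrite mulr_ge0 ?q0 ?pi0 //= -[X in _ <= X]mulr1 ler_wpM2l ?q0 ?pi_le1 //.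
- by move=> a x; rewrite mulr_ge0 ?q0 ?pi0.
rewrite (_ : (fun x => _) = q s) ?qsum //.
by apply: funext => x; rewrite -mulr_sumr pisum mulr1.
Qed.

Lemma occS k s' : occ q T d1 pi k.+2 s' =
  \sum_(s : S) \sum_(a : A) occ q T d1 pi k.+1 s * pibar q pi s a * T s a s'.
Proof. by []. Qed.

Lemma occ0 k s : 0 <= occ q T d1 pi k s.
Proof.
elim: k s => [|k IH] s //=; case: k IH => [|k] IH; first exact: d10.
apply: sumr_ge0 => s0 _; apply: sumr_ge0 => a _.
by rewrite !mulr_ge0 ?IH ?pibar0 ?T0.
Qed.

Lemma occ_lay k s : occ q T d1 pi k s != 0 -> lay s = k.
Proof.
elim: k s => [|k IH] s /=; first by rewrite eqxx.
case: k IH => [|k] IH; first exact: d1lay.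
move=> Hne; apply/eqP; apply: contraNT Hne => Hl; apply/eqP.
rewrite big1 // => s0 _; rewrite big1 // => a _.
have [->|o] := eqVneq (occ q T d1 pi k.+1 s0) 0; first by rewrite !mul0r.
have [->|t] := eqVneq (T s0 a s) 0; first by rewrite mulr0.
by move: Hl; rewrite (Tlay _ _ _ t) (IH _ o) eqxx.
Qed.

Lemma occ_sum k : (1 <= k <= H)%N -> \sum_(s : S) occ q T d1 pi k s <= 1.
Proof.
elim: k => [|k IH] //; case: k IH => [|k] IH; first by rewrite /= d1sum.
move=> /andP[_ kH].
have {}IH := IH (ltnW kH).
under eq_bigr do rewrite occS.
rewrite exchange_big.
apply: le_trans IH; apply: ler_sum => s0 _.
rewrite exchange_big.
have [->|o] := eqVneq (occ q T d1 pi k.+1 s0) 0.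
  by rewrite big1 // => a _; rewrite big1 // => s' _; rewrite !mul0r.
have ls := occ_lay _ _ o.
under eq_bigr do rewrite -mulr_sumr Tsum ?ls // mulr1.
rewrite -mulr_sumr -[X in _ <= X]mulr1 ler_wpM2l ?occ0 //; exact: pibar_sum.
Qed.

Lemma occ_obs0 k x : 0 <= occ_obs q T d1 pi k x.
Proof. apply: sumr_ge0 => s _; by rewrite mulr_ge0 ?occ0 ?q0. Qed.

Lemma occ_obs_part k L : (1 <= k <= H)%N -> uniq L ->
  \sum_(x <- L) occ_obs q T d1 pi k x <= 1.
Proof.
move=> kH uL; rewrite /occ_obs exchange_big /=.
apply: le_trans (occ_sum _ kH); apply: ler_sum => s _.
rewrite -mulr_sumr -[X in _ <= X]mulr1 ler_wpM2l ?occ0 //; exact: q_part.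
Qed.

End Policy.

Section Sampling.
Variables (I : finType) (Psi : I -> X -> A -> R) (h : nat).
Hypothesis hI : (0 < #|I|)%N.
Hypothesis hPsi_pol : forall i, is_policy (Psi i).
Hypothesis hh : (2 <= h <= H)%N.

Local Notation Dx := (Dxa q T d1 Psi h).
Local Notation To := (Tobs q gstar T).
Local Notation rho := (rho_obs q gstar T d1 Psi h).

Lemma D0 x a : 0 <= Dx x a.
Proof.
rewrite /Dxa divr_ge0 // mulr_ge0 ?invr_ge0 //.
apply: sumr_ge0 => i _; exact: occ_obs0.
Qed.

Lemma hH1 : (1 <= h.-1 <= H)%N.
Proof. case/andP: hh; case: h => // k; rewrite ltnS /= => -> kH; exact: ltnW. Qed.

Lemma hH2 : (h.-1 < H)%N.
Proof. case/andP: hh; case: h => // k. Qed.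

Lemma Dlay x a : Dx x a != 0 -> lay (gstar x) = h.-1.
Proof.
move=> Hne; apply/eqP; apply: contraNT Hne => Hl; apply/eqP.
rewrite /Dxa big1 ?mulr0 ?mul0r // => i _.
rewrite /occ_obs big1 // => s _.
have [->|qn] := eqVneq (q s x) 0; first by rewrite mulr0.
have gs := qsupp _ _ qn.
have [->|o] := eqVneq (occ q T d1 (Psi i) h.-1 s) 0; first by rewrite mul0r.
by move: Hl; rewrite gs (@occ_lay (Psi i) _ _ o) eqxx.
Qed.

Lemma D_part L : uniq L -> \sum_(x <- L) \sum_(a : A) Dx x a <= 1.
Proof.
move=> uL; rewrite exchange_big /=.
have cI : (#|I|%:R : R) != 0 by rewrite pnatr_eq0 -lt0n.
apply: (@le_trans _ _ (\sum_(a : A) 1 / (#|A|%:R : R))).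
  apply: ler_sum => a _; rewrite /Dxa -mulr_suml -mulr_sumr.
  rewrite ler_wpM2r ?invr_ge0 //.
  rewrite -[X in _ <= X](mulVf cI) ler_wpM2l ?invr_ge0 //.
  rewrite exchange_big /=.
  apply: (@le_trans _ _ (\sum_(i : I) (1:R))); last by rewrite sumr_const.
  apply: ler_sum => i _; exact: occ_obs_part (hPsi_pol i) _ _ hH1 uL.
rewrite sumr_const.
have hlp (n m : nat) : n = m -> ((1 / (m%:R : R)) *+ n <= 1).
  move=> ->; rewrite -mulr_natr mul1r.
  have [->|cA] := eqVneq (m%:R : R) 0; first by rewrite mulr0.
  by rewrite mulVf.
by apply: hlp; apply: eq_card.
Qed.

Lemma To0 x a x' : 0 <= To x a x'.
Proof. by rewrite /Tobs mulr_ge0 ?q0 ?T0. Qed.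

Lemma To_part x a L : (lay (gstar x) < H)%N -> uniq L ->
  \sum_(x' <- L) To x a x' <= 1.
Proof.
move=> lt uL.
have E x' : To x a x' = \sum_(s' : S)
    (if s' == gstar x' then q s' x' * T (gstar x) a s' else 0).
  by rewrite -big_mkcond big_pred1_eq.
under eq_bigr do rewrite E.
rewrite exchange_big /= -(Tsum (gstar x) a lt).
apply: ler_sum => s' _.
apply: (@le_trans _ _ (\sum_(x' <- L) q s' x' * T (gstar x) a s')).
  by apply: ler_sum => x' _; case: ifP => _ //; rewrite mulr_ge0 ?q0 ?T0.
rewrite -mulr_suml ler_piMl ?T0 //; exact: q_part.
Qed.

Lemma To_D_part x a L : Dx x a != 0 -> uniq L ->
  \sum_(x' <- L) To x a x' <= 1.
Proof. move=> /Dlay E; apply: To_part; rewrite E; exact: hH2. Qed.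

Lemma To_D x a x' : Dx x a * To x a x' <= Dx x a.
Proof.
have [->|Dn] := eqVneq (Dx x a) 0; first by rewrite mul0r.
rewrite ler_piMr ?D0 //.
by have := @To_D_part x a [:: x'] Dn isT; rewrite big_seq1.
Qed.

Lemma g0 x x' : 0 <= \sum_(a : A) Dx x a * To x a x'.
Proof. by apply: sumr_ge0 => a _; rewrite mulr_ge0 ?D0 ?To0. Qed.

Lemma g_bnd x' : bnd (fun x => \sum_(a : A) Dx x a * To x a x').
Proof.
exists 1 => L uL; apply: le_trans (D_part _ uL).
apply: ler_sum => x _; apply: ler_sum => a _; exact: To_D.
Qed.

Lemma rho0 x' : 0 <= rho x'.
Proof. apply: csum_ge0 => x; exact: g0. Qed.

Lemma g_part x' M : uniq M ->
  \sum_(x <- M) \sum_(a : A) Dx x a * To x a x' <= rho x'.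
Proof. move=> uM; apply: seq_le_csum => //; [move=> x; exact: g0|exact: g_bnd]. Qed.

Lemma rho_part L : uniq L -> \sum_(x' <- L) rho x' <= 1.
Proof.
move=> uL; rewrite /rho_obs.
rewrite -(@csum_sum _ _ _ L (fun x' x => \sum_(a : A) Dx x a * To x a x')); last first.
- exact: g_bnd.
- by move=> j x; exact: g0.
apply: csum_le.
  by move=> x; apply: sumr_ge0 => x' _; exact: g0.
move=> M uM; apply: le_trans (D_part _ uM); apply: ler_sum => x _.
rewrite exchange_big /=; apply: ler_sum => a _.
rewrite -mulr_sumr.
have [->|Dn] := eqVneq (Dx x a) 0; first by rewrite mul0r.
rewrite ler_piMr ?D0 //; exact: To_D_part.
Qed.

Lemma rho_bnd : bnd rho.
Proof. exists 1; exact: rho_part. Qed.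

Definition Pst s := csum (fun x => \sum_(a : A) Dx x a * T (gstar x) a s).

Lemma rhoP x' : rho x' = q (gstar x') x' * Pst (gstar x').
Proof.
rewrite /rho_obs /Pst -csumZ ?q0 //; last first.
  by move=> x; apply: sumr_ge0 => a _; rewrite mulr_ge0 ?D0 ?T0.
congr csum; apply: funext => x; rewrite mulr_sumr; apply: eq_bigr => a _.
by rewrite /Tobs mulrCA.
Qed.

Lemma rho_stP s : rho_st q gstar T d1 Psi h s = Pst s.
Proof.
rewrite /rho_st (_ : (fun x' => _) = (fun x' => Pst s * q s x')).
  rewrite csumZ ?qsum ?mulr1 //; first exact: q0.
  by apply: csum_ge0 => x; apply: sumr_ge0 => a _; rewrite mulr_ge0 ?D0 ?T0.
apply: funext => x'; case: eqP => [<-|ne]; first by rewrite rhoP mulrC.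
have /eqP -> : q s x' == 0; last by rewrite mulr0.
by apply/negPn/negP => /qsupp.
Qed.

Lemma rho_fact x' : rho x' = q (gstar x') x' * rho_st q gstar T d1 Psi h (gstar x').
Proof. by rewrite rho_stP rhoP. Qed.

Lemma rho_st0 s : 0 <= rho_st q gstar T d1 Psi h s.
Proof.
rewrite rho_stP; apply: csum_ge0 => x; apply: sumr_ge0 => a _.
by rewrite mulr_ge0 ?D0 ?T0.
Qed.

Lemma b_part N (phiB : X -> 'I_N) i G : uniq G ->
  (forall x', x' \in G -> phiB x' = i) ->
  \sum_(x' <- G) rho x' <= bucket_mass q gstar T d1 Psi h phiB i.
Proof.
move=> uG HG; rewrite /bucket_mass.
have f0 x' : 0 <= (if phiB x' == i then rho x' else 0) by case: ifP => _; rewrite ?rho0.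
rewrite (@eq_big_seq _ _ _ _ _ _ (fun x' => if phiB x' == i then rho x' else 0)).
  apply: seq_le_csum => //; apply: (bnd_le _ _ _ rho_bnd) => x'.
  by rewrite f0 /=; case: ifP => _ //; exact: rho0.
by move=> x' /HG ->; rewrite eqxx.
Qed.

Section Main.
Variables (N : nat) (J : finType) (Phi : J -> X -> 'I_N)
  (w_hat : 'I_N -> A -> 'I_N -> R) (jF jB : J) (i : 'I_N) (Dl : R).
Hypothesis hreg : (ED q gstar T d1 Psi h
            (fun z => let: (x, a, x', _) := z in
                      (w_hat (Phi jF x) a (Phi jB x')
                       - fstar q gstar T d1 Psi h x a x') ^+ 2)%R
           <= Dl%:E)%E.

Let cc x a := w_hat (Phi jF x) a i.
Let ee x a x' := `|cc x a - fstar q gstar T d1 Psi h x a x'|.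
Let mm x a x' := To x a x' + rho x'.

Lemma mm0 x a x' : 0 <= mm x a x'.
Proof. by rewrite addr_ge0 ?To0 ?rho0. Qed.

Lemma v_le2 x a G : uniq G -> Dx x a != 0 -> \sum_(x' <- G) mm x a x' <= 2.
Proof.
move=> uG Dn; rewrite big_split /=.
have := @To_D_part x a G Dn uG; have := @rho_part G uG; lra.
Qed.

Lemma Dv_le x a G y : uniq G -> 0 <= y ->
  Dx x a * (\sum_(x' <- G) mm x a x') * y <= 2 * Dx x a * y.
Proof.
move=> uG y0.
have [->|Dn] := eqVneq (Dx x a) 0; first by rewrite !(mulr0, mul0r).
rewrite ler_wpM2r // mulrC ler_wpM2r ?D0 //; exact: v_le2.
Qed.

Lemma main_bound :
  (EDcoup q gstar T d1 Psi h
     (fun z => let: (x, a, x1', x2') := z in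
       (if (Phi jB x1' == i) && (Phi jB x2' == i) then 1 else 0)
       * `|Vfun q gstar T d1 Psi h x1' x2' x a|)%R
   <= (8 * Num.sqrt (bucket_mass q gstar T d1 Psi h (Phi jB) i * Dl))%:E)%E.
Proof.
rewrite /EDcoup; apply: ge_ereal_sup => _ [F [finF _] <-].
rewrite fsbig_finite // sumEFin lee_fin.
have := fset_uniq (fset_set F); move: (enum_fset (fset_set F)) => s us.
set b := bucket_mass _ _ _ _ _ _ _ _.
pose Mx := undup [seq z.1.1.1 | z <- s].
pose Ml := undup ([seq z.1.2 | z <- s] ++ [seq z.2 | z <- s]).
pose XA := [seq (x, a) | x <- Mx, a <- index_enum A].
pose G := [seq x' <- Ml | Phi jB x' == i].
have uMx : uniq Mx := undup_uniq _.
have uMl : uniq Ml := undup_uniq _.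
have uG : uniq G := filter_uniq _ uMl.
have uXA : uniq XA := pairs_uniq uMx (index_enum_uniq A).
have GP x' : x' \in G -> Phi jB x' = i by rewrite mem_filter => /andP[/eqP].
pose v x a := \sum_(x' <- G) mm x a x'.
pose u x a := \sum_(x' <- G) mm x a x' * ee x a x'.
pose Y := \sum_(x <- Mx) \sum_(a : A) Dx x a * v x a * u x a.
apply: (@le_trans _ _ (2 * Y)).
  pose L := [seq (p, x2) | p <- [seq (xa, x1) | xa <- XA, x1 <- Ml], x2 <- Ml].
  apply: (le_trans (sub_sum (L:=L) _ _ _ _)) => //.
  - exact: pairs_uniq (pairs_uniq uXA uMl) uMl.
  - move=> [[[x a] x1] x2] zs.
    apply: allpairs_f; [apply: allpairs_f; [apply: allpairs_f|]|].
    + by rewrite mem_undup; apply/mapP; exists (x, a, x1, x2).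
    + exact: mem_index_enum.
    + by rewrite mem_undup mem_cat; apply/orP; left; apply/mapP; exists (x, a, x1, x2).
    + by rewrite mem_undup mem_cat; apply/orP; right; apply/mapP; exists (x, a, x1, x2).
  - move=> [[[x a] x1] x2] /=.
    apply: mulr_ge0; first by rewrite mulr_ge0 ?rho0 // mulr_ge0 ?D0 ?rho0.
    by apply: mulr_ge0 => //; case: (_ && _).
  rewrite /L /XA !big_allpairs /= /Y mulr_sumr; apply: ler_sum => x _.
  rewrite mulr_sumr; apply: ler_sum => a _.
  rewrite /v /u -dbl_sum /G !big_filter.
  rewrite [X in _ <= X]big_mkcond; apply: ler_sum => x1 _; case: ifP => P1; last first.
    by rewrite big1 // => x2 _; rewrite /= mul0r mulr0.
  rewrite big_filter [X in _ <= X]big_mkcond; apply: ler_sum => x2 _; case: ifP; rewrite andTb => P2; last first.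
    by rewrite P2 mul0r mulr0.
  rewrite P2 /= /mm /ee /cc /Tobs !rho_fact /Vfun /fstar.
  by apply: pwD; rewrite ?D0 ?q0 ?T0 ?rho_st0.
have mm0' x a x' : 0 <= mm x a x' := mm0 x a x'.
have ee0 x a x' : 0 <= ee x a x' := normr_ge0 _.
have v0 x a : 0 <= v x a by apply: sumr_ge0 => *; exact: mm0.
have Y0 : 0 <= Y.
  apply: sumr_ge0 => x _; apply: sumr_ge0 => a _.
  apply: mulr_ge0; first by rewrite mulr_ge0 ?D0.
  by apply: sumr_ge0 => *; rewrite mulr_ge0.
pose P := [seq (xa, x') | xa <- XA, x' <- G].
pose W := fun p : X * A * X => Dx p.1.1 p.1.2 * v p.1.1 p.1.2 * mm p.1.1 p.1.2 p.2.
pose E := fun p : X * A * X => ee p.1.1 p.1.2 p.2.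
have W0 p : 0 <= W p by rewrite /W mulr_ge0 ?mm0' // mulr_ge0 ?D0 ?v0.
have eY : Y = \sum_(p <- P) W p * E p.
  rewrite /P /XA !big_allpairs /Y; apply: eq_bigr => x _; apply: eq_bigr => a _.
  by rewrite /u mulr_sumr; apply: eq_bigr => x' _; rewrite /W /E /= !mulrA.
have eW : \sum_(p <- P) W p = \sum_(x <- Mx) \sum_(a : A) Dx x a * v x a * v x a.
  rewrite /P /XA !big_allpairs; apply: eq_bigr => x _; apply: eq_bigr => a _.
  by rewrite [in RHS]/v mulr_sumr.
have eWE : \sum_(p <- P) W p * E p ^+ 2 = \sum_(x <- Mx) \sum_(a : A) \sum_(x' <- G)
    Dx x a * v x a * (mm x a x' * ee x a x' ^+ 2).
  rewrite /P /XA !big_allpairs; apply: eq_bigr => x _; apply: eq_bigr => a _.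
  by apply: eq_bigr => x' _; rewrite /W /E /= !mulrA.
have h1 : \sum_(x <- Mx) \sum_(a : A) \sum_(x' <- G) Dx x a * To x a x' <= b.
  under eq_bigr do rewrite exchange_big.
  rewrite exchange_big /=.
  apply: le_trans (@b_part _ (Phi jB) i G uG GP); apply: ler_sum => x' _; exact: g_part uMx.
have h2 : \sum_(x <- Mx) \sum_(a : A) Dx x a * \sum_(x' <- G) rho x' <= b.
  under eq_bigr do rewrite -mulr_suml.
  rewrite -mulr_suml; apply: le_trans (@b_part _ (Phi jB) i G uG GP).
  rewrite ler_piMl ?D_part //; apply: sumr_ge0 => *; exact: rho0.
have hDv : \sum_(x <- Mx) \sum_(a : A) Dx x a * v x a <= 2 * b.
  rewrite (_ : \sum_(x <- Mx) \sum_(a : A) Dx x a * v x a =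
     \sum_(x <- Mx) \sum_(a : A) (\sum_(x' <- G) Dx x a * To x a x' + Dx x a * \sum_(x' <- G) rho x')).
    under eq_bigr do rewrite big_split.
    rewrite big_split /=; lra.
  apply: eq_bigr => x _; apply: eq_bigr => a _.
  by rewrite /v /mm big_split /= mulrDr mulr_sumr.
have hW : \sum_(p <- P) W p <= 4 * b.
  rewrite eW; apply: (@le_trans _ _ (\sum_(x <- Mx) \sum_(a : A) 2 * (Dx x a * v x a))).
    apply: ler_sum => x _; apply: ler_sum => a _; rewrite mulrA; exact: Dv_le.
  under eq_bigr do rewrite -mulr_sumr.
  by rewrite -mulr_sumr (_ : 4 * b = 2 * (2 * b)) ?ler_wpM2l //; ring.
pose L4 := [seq (p, bb) | p <- P, bb <- [:: true; false]].
have uP : uniq P := pairs_uniq uXA uG.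
have PED : \sum_(z <- L4) Dens q gstar T d1 Psi h z *
    (let: (x, a, x', _) := z in
       (w_hat (Phi jF x) a (Phi jB x') - fstar q gstar T d1 Psi h x a x') ^+ 2) <= Dl.
  rewrite -lee_fin; apply: le_trans hreg; rewrite /ED.
  apply: (seq_le_esum (fun z => Dens q gstar T d1 Psi h z *
    (let: (x, a, x', _) := z in
       (w_hat (Phi jF x) a (Phi jB x') - fstar q gstar T d1 Psi h x a x') ^+ 2))).
    move=> [[[x a] x'] bb] /=; apply: mulr_ge0; last exact: sqr_ge0.
    by case: bb; rewrite divr_ge0 // mulr_ge0 ?D0 ?To0 ?rho0.
  by rewrite /L4; apply: pairs_uniq.
have ePED : \sum_(z <- L4) Dens q gstar T d1 Psi h z *
    (let: (x, a, x', _) := z in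
       (w_hat (Phi jF x) a (Phi jB x') - fstar q gstar T d1 Psi h x a x') ^+ 2) =
   \sum_(x <- Mx) \sum_(a : A) \sum_(x' <- G) Dx x a * (mm x a x' * ee x a x' ^+ 2) / 2.
  rewrite /L4 /P /XA !big_allpairs; apply: eq_bigr => x _; apply: eq_bigr => a _.
  rewrite big_seq [RHS]big_seq; apply: eq_bigr => x' /GP Px'.
  rewrite !big_cons big_nil /= Px' /mm /ee /cc real_normK ?num_real //; ring.
have hWE : \sum_(p <- P) W p * E p ^+ 2 <= 4 * Dl.
  rewrite eWE.
  apply: (@le_trans _ _ (\sum_(x <- Mx) \sum_(a : A) \sum_(x' <- G)
     2 * Dx x a * (mm x a x' * ee x a x' ^+ 2))).
    apply: ler_sum => x _; apply: ler_sum => a _; apply: ler_sum => x' _.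
    by apply: Dv_le; rewrite // mulr_ge0 ?sqr_ge0.
  apply: (@le_trans _ _ (4 * \sum_(z <- L4) Dens q gstar T d1 Psi h z *
    (let: (x, a, x', _) := z in
       (w_hat (Phi jF x) a (Phi jB x') - fstar q gstar T d1 Psi h x a x') ^+ 2))); last first.
    by rewrite ler_wpM2l.
  rewrite ePED !mulr_sumr; apply: ler_sum => x _; rewrite !mulr_sumr; apply: ler_sum => a _.
  rewrite !mulr_sumr; apply: ler_sum => x' _.
  by rewrite le_eqVlt; apply/orP; left; apply/eqP; field.
have HY : Y ^+ 2 <= 4 ^+ 2 * (b * Dl).
  rewrite eY; apply: le_trans (cs_weighted _ P W E W0) _.
  rewrite (_ : 4 ^+ 2 * (b * Dl) = (4 * b) * (4 * Dl)); last by ring.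
  apply: ler_pM.
  - by apply: sumr_ge0 => p _.
  - by apply: sumr_ge0 => p _; rewrite mulr_ge0 ?sqr_ge0.
  - exact: hW.
  - exact: hWE.
have b0 : 0 <= b by apply: csum_ge0 => x'; case: ifP => _ //; exact: rho0.
have : Num.sqrt (Y ^+ 2) <= Num.sqrt (4 ^+ 2 * (b * Dl)) by exact: ler_wsqrtr.
rewrite sqrtr_sqr ger0_norm // sqrtrM ?sqr_ge0 // sqrtr_sqr ger0_norm //; lra.
Qed.

End Main.

End Sampling.
End MDP.

Theorem mainTheorem13
  (R : realType) (H : nat) (S : finType) (X : countType) (A : finType)
  (lay : S -> nat) (q : S -> X -> R) (gstar : X -> S)
  (T : S -> A -> S -> R) (d1 : S -> R)
  (hmdp : block_mdp H lay q gstar T d1)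
  (h : nat) (hh : (2 <= h <= H)%N)
  (I : finType) (Psi : I -> X -> A -> R) (alpha : R)
  (hI : (0 < #|I|)%N) (hPsi_inj : injective Psi)
  (hPsi_pol : forall i, is_policy (Psi i))
  (halpha : 0 < alpha)
  (hcover : policy_cover lay q T d1 Psi alpha h.-1)
  (N : nat) (J : finType) (Phi : J -> X -> 'I_N) (hPhi_inj : injective Phi)
  (delta : R) (hdelta : 0 < delta < 1)
  (n : nat) (hn : (0 < n)%N) (samples : 'I_n -> X * A * X * bool)
  (w_hat : 'I_N -> A -> 'I_N -> R) (jF jB : J)
  (hw : in_WN w_hat)
  (hERM : forall (w : 'I_N -> A -> 'I_N -> R) (jF' jB' : J), in_WN w ->
     emp_loss samples w_hat (Phi jF) (Phi jB)
       <= emp_loss samples w (Phi jF') (Phi jB'))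
  (hreg : (ED q gstar T d1 Psi h
            (fun z => let: (x, a, x', _) := z in
                      (w_hat (Phi jF x) a (Phi jB x')
                       - fstar q gstar T d1 Psi h x a x') ^+ 2)%R
           <= (Delta_reg #|J| N #|A| n delta)%:E)%E)
  (i : 'I_N) :
  (EDcoup q gstar T d1 Psi h
     (fun z => let: (x, a, x1', x2') := z in
       (if (Phi jB x1' == i) && (Phi jB x2' == i) then 1 else 0)
       * `|Vfun q gstar T d1 Psi h x1' x2' x a|)%R
   <= (8 * Num.sqrt (bucket_mass q gstar T d1 Psi h (Phi jB) i
                     * Delta_reg #|J| N #|A| n delta))%:E)%E.
Proof.
exact: (@main_bound _ _ _ _ _ _ _ _ _ _ hmdp _ _ _ hI hPsi_pol hh _ _ _ _ _ _ i _ hreg).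
Qed.
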